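(* Let $(\mathbf Z_n,\mathbf A_{n\times n})$ be generated from the stochastic block model with parameters $(\pi,\rho_nS)$, with $S>0$ fixed and $\rho_n\to0$. For $\mathbf z_n,\mathbf e_n\in[k]^n$ let \[ W(\mathbf e_n,\mathbf z_n)=\frac12\sum_{1\le a,b\le k}\Bigl(\frac{o_{ab}(\mathbf e_n)}{n^2}-\frac{\mathbb E(o_{ab}(\mathbf e_n))}{n^2}-\frac{o_{ab}(\mathbf z_n)}{n^2}+\frac{\mathbb E(o_{ab}(\mathbf z_n))}{n^2}\Bigr)\log S_{ab}, \] with expectations conditional on $\mathbf Z_n=\mathbf z_n$. Then there is a constant $D$ depending only on $S$ such that for all $\mathbf z_n,\mathbf e_n\in[k]^n$ and all $x$, \[ \mathbb P\bigl(W(\mathbf e_n,\mathbf z_n)>x\mid\mathbf Z_n=\mathbf z_n\bigr)\le\exp\Bigl[-\sup_{t\in(0,1]}\bigl\{n^2\bigl(xt-\rho_nC_t(R,S)\bigr)\bigr\}+D\rho_n m^2\Bigr], \] where $R=R(\mathbf e_n,\mathbf z_n)$, $m=d(\mathbf e_n,\mathbf z_n)$, and \[ C_t(R,S)=\sum_a\sum_{b\ne b'}[R^T\mathbf 1]_a\,K_t(S_{ab}\|S_{ab'})\,R_{b'b},\qquad K_t(p\|q)=p^{1-t}q^t+tp\log(p/q)-p. \]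
   Context: SBM with parameters $(\pi,\rho_nS)$: $k\ge2$ fixed; $\pi$ a probability vector on $[k]$ with all $\pi_a>0$; $S$ a fixed symmetric $k\times k$ matrix with strictly positive entries; $\rho_n>0$. $\mathbf Z_n$ i.i.d. with law $\pi$; given $\mathbf Z_n=\mathbf z_n$, $\mathbf A_{n\times n}$ symmetric, zero diagonal, $A_{ij}$ ($i<j$) independent Bernoulli$(\rho_nS_{z_iz_j})$. $o_{ab}(\mathbf e_n)=\sum_{i,j}\mathbf 1\{e_i=a,e_j=b\}A_{ij}$. Confusion matrix $R_{ab}(\mathbf e_n,\mathbf z_n)=\frac1n\sum_i\mathbf 1\{e_i=a,z_i=b\}$, $\mathbf 1$ the all-ones vector (so $[R^T\mathbf 1]_a=n_a(\mathbf z_n)/n$). $d(\mathbf e_n,\mathbf z_n)=\#\{i:e_i\ne z_i\}$ is the Hamming distance. *)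

(* Defs.v *)
From HB Require Import structures.
From mathcomp Require Import all_boot all_order all_algebra.
From mathcomp Require Import all_classical all_reals all_analysis.
Set Implicit Arguments. Unset Strict Implicit. Unset Printing Implicit Defensive.
Import Order.TTheory GRing.Theory Num.Theory.
Local Open Scope ring_scope.

Section SBM.
Variable R : realType.
Variable k n : nat.

(* An adjacency "matrix" on [n]; only symmetric, zero-diagonal ones are
   graphs (the others get probability 0). *)
Definition adj := {ffun 'I_n * 'I_n -> bool}.

Definition valid_adj (A : adj) : bool :=
  [forall i, forall j, A (i, j) == A (j, i)] && [forall i, ~~ A (i, i)].

Definition Aval (A : adj) (i j : 'I_n) : R := (A (i, j))%:R.

Definition sbm_weight (rho : R) (S : 'M[R]_k) (z : 'I_n -> 'I_k) (A : adj) : R :=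
  if valid_adj A then
    \prod_(p : 'I_n * 'I_n | (p.1 < p.2)%N)
       (if A p then rho * S (z p.1) (z p.2) else 1 - rho * S (z p.1) (z p.2))
  else 0.

Definition sbm_prob rho S z (E : pred adj) : R :=
  \sum_(A : adj | E A) sbm_weight rho S z A.

Definition sbm_expect rho S z (f : adj -> R) : R :=
  \sum_(A : adj) sbm_weight rho S z A * f A.

Definition o_count (e : 'I_n -> 'I_k) (A : adj) (a b : 'I_k) : R :=
  \sum_(i < n) \sum_(j < n) ((e i == a) && (e j == b))%:R * Aval A i j.

Definition Wstat rho S (e z : 'I_n -> 'I_k) (A : adj) : R :=
  2^-1 * \sum_(a < k) \sum_(b < k)
    ( o_count e A a b / (n%:R ^+ 2)
    - sbm_expect rho S z (fun B => o_count e B a b) / (n%:R ^+ 2)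
    - o_count z A a b / (n%:R ^+ 2)
    + sbm_expect rho S z (fun B => o_count z B a b) / (n%:R ^+ 2)) * ln (S a b).

Definition confusion (e z : 'I_n -> 'I_k) : 'M[R]_k :=
  \matrix_(a, b) (#|[set i | (e i == a) && (z i == b)]|%:R / n%:R).

Definition hamming (e z : 'I_n -> 'I_k) : nat := #|[set i | e i != z i]|.

End SBM.

Definition Kt (R : realType) (t p q : R) : R :=
  p `^ (1 - t) * q `^ t + t * p * ln (p / q) - p.

Definition Ct (R : realType) (k : nat) (t : R) (Rm S : 'M[R]_k) : R :=
  \sum_(a < k) \sum_(b < k) \sum_(b' < k | b != b')
    (Rm^T *m (const_mx 1 : 'cV[R]_k)) a ord0 * Kt t (S a b) (S a b') * Rm b' b.

(* Main.v *)
Require Import Defs.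
From HB Require Import structures.
From mathcomp Require Import all_boot all_order all_algebra.
From mathcomp Require Import all_classical all_reals all_analysis.
From mathcomp Require Import ring lra.
Import Order.TTheory GRing.Theory Num.Theory numFieldNormedType.Exports.
Local Open Scope ring_scope.
Set Implicit Arguments. Unset Strict Implicit.

Section Fact.
Variable R : realType.
Variables k n : nat.
Variable S : 'M[R]_k.
Variable rho : R.
Variable z : 'I_n -> 'I_k.

Definition Pp (p : 'I_n * 'I_n) : R := rho * S (z p.1) (z p.2).
Definition Hp (p : 'I_n * 'I_n) (b : bool) : R :=
  if (p.1 < p.2)%N then (if b then Pp p else 1 - Pp p) else (if b then 0 else 1).
Definition phi (f : {ffun 'I_n * 'I_n -> bool}) : adj n :=
  [ffun p : 'I_n * 'I_n => if (p.1 < p.2)%N then f p else if (p.2 < p.1)%N then f (p.2, p.1) else false].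
Definition restr (A : adj n) : {ffun 'I_n * 'I_n -> bool} :=
  [ffun p : 'I_n * 'I_n => (p.1 < p.2)%N && A p].

Lemma phi_valid f : valid_adj (phi f).
Proof.
apply/andP; split.
  apply/forallP => i; apply/forallP => j; rewrite !ffunE /=.
  case: (ltngtP i j) => //.
apply/forallP => i; rewrite ffunE /= ltnn //.
Qed.

Lemma phi_restr A : valid_adj A -> phi (restr A) = A.
Proof.
case/andP => /forallP Hs /forallP Hd.
apply/ffunP => -[i j]; rewrite !ffunE /=.
case: (ltngtP i j) => Hij /=.
- by [].
- apply/esym/eqP; have := Hs i; move/forallP/(_ j); by [].
- have -> : i = j by apply/val_inj.
  by have := Hd j; case: (A (j, j)).
Qed.

Lemma restr_phi f : (restr (phi f) == f) = [forall p, f p ==> (p.1 < p.2)%N].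
Proof.
apply/eqP/forallP.
  by move=> <- p; rewrite ffunE; apply/implyP => /andP [].
move=> H; apply/ffunP => p; rewrite !ffunE.
case: (ltnP p.1 p.2) => Hp //; have := H p; rewrite ltnNge Hp.
by case: (f p).
Qed.

Lemma factor (G : adj n -> R) :
  sbm_expect rho S z G = \sum_(f : {ffun 'I_n * 'I_n -> bool}) (\prod_p Hp p (f p)) * G (phi f).
Proof.
rewrite /sbm_expect (bigID (fun A => valid_adj A)) /=.
rewrite [X in _ + X]big1 ?addr0; last first.
  by move=> A /negbTE HA; rewrite /sbm_weight HA mul0r.
rewrite (reindex_onto phi restr); last by move=> A; apply: phi_restr.
rewrite [RHS](bigID (fun f => restr (phi f) == f)) /=.
rewrite [X in _ = _ + X]big1 ?addr0; last first.
  move=> f; rewrite restr_phi => /forallPn [p]; rewrite negb_imply => /andP [fp lp].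
  rewrite (bigD1 p) //= /Hp (negbTE lp) fp mul0r mul0r //.
apply: eq_big => f; first by rewrite phi_valid.
case/andP => _; rewrite restr_phi => /forallP H; congr (_ * _).
rewrite /sbm_weight phi_valid [RHS](bigID (fun p : 'I_n * 'I_n => (p.1 < p.2)%N)) /=.
rewrite [X in _ = _ * X]big1 ?mulr1; last first.
  move=> p /negbTE hp; rewrite /Hp hp; have := H p; rewrite hp; case: (f p) => //.
apply: eq_bigr => p hp; rewrite /Hp hp ffunE hp //.
Qed.


Lemma distr (g : 'I_n * 'I_n -> bool -> R) :
  \sum_(f : {ffun 'I_n * 'I_n -> bool}) (\prod_p Hp p (f p)) * \prod_p g p (f p)
  = \prod_p (Hp p true * g p true + Hp p false * g p false).
Proof.
transitivity (\sum_(f : {ffun 'I_n * 'I_n -> bool}) \prod_p (Hp p (f p) * g p (f p))).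
  by apply: eq_bigr => f _; rewrite big_split.
rewrite -(bigA_distr_bigA (fun p b => Hp p b * g p b)) /=.
by apply: eq_bigr => p _; rewrite big_bool.
Qed.

Lemma Hp_sum p : Hp p true + Hp p false = 1.
Proof. rewrite /Hp; case: ifP => _; rewrite ?addr0 ?add0r // addrC subrK //. Qed.

Lemma mass : \sum_(f : {ffun 'I_n * 'I_n -> bool}) \prod_p Hp p (f p) = 1.
Proof.
transitivity (\sum_(f : {ffun 'I_n * 'I_n -> bool}) (\prod_p Hp p (f p)) * \prod_(p : 'I_n * 'I_n) (1 : R)).
  by apply: eq_bigr => f _; rewrite [X in _ = _ * X]big1 ?mulr1.
rewrite (distr (fun _ _ => 1)); apply: big1 => p _; rewrite !mulr1 Hp_sum //.
Qed.

Lemma marginal q : \sum_(f : {ffun 'I_n * 'I_n -> bool}) (\prod_p Hp p (f p)) * (f q)%:R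
  = if (q.1 < q.2)%N then Pp q else 0.
Proof.
transitivity (\sum_(f : {ffun 'I_n * 'I_n -> bool}) (\prod_p Hp p (f p)) *
   \prod_(p : 'I_n * 'I_n) (fun p (b : bool) => if p == q then b%:R else 1 : R) p (f p)).
  apply: eq_bigr => f _; congr (_ * _).
  rewrite (bigD1 q) //= eqxx big1 ?mulr1 // => p /negbTE ->; by [].
rewrite (distr (fun p (b : bool) => if p == q then b%:R else 1)) (bigD1 q) //= eqxx big1 ?mulr1; last first.
  by move=> p /negbTE ->; rewrite !mulr1 Hp_sum.
by rewrite mulr0 addr0 /Hp; case: ifP.
Qed.


Lemma mgf (c : 'I_n * 'I_n -> R) :
  \sum_(f : {ffun 'I_n * 'I_n -> bool}) (\prod_p Hp p (f p)) *
     expR (\sum_(p : 'I_n * 'I_n | (p.1 < p.2)%N) (f p)%:R * c p)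
  = \prod_(p : 'I_n * 'I_n | (p.1 < p.2)%N) (1 - Pp p + Pp p * expR (c p)).
Proof.
transitivity (\sum_(f : {ffun 'I_n * 'I_n -> bool}) (\prod_p Hp p (f p)) *
   \prod_(p : 'I_n * 'I_n) (fun (p : 'I_n * 'I_n) (b : bool) => if (p.1 < p.2)%N then expR (b%:R * c p) else 1) p (f p)).
  apply: eq_bigr => f _; congr (_ * _); rewrite expR_sum big_mkcond /=.
  by apply: eq_bigr.
move: (distr (fun (p : 'I_n * 'I_n) (b : bool) => if (p.1 < p.2)%N then expR (b%:R * c p) else 1)) => /= ->.
rewrite [RHS]big_mkcond; apply: eq_bigr => p _ /=; rewrite /Hp.
case: ifP => _; last by rewrite mul0r add0r mulr1.
by rewrite mul0r expR0 mulr1 mul1r addrC.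
Qed.

Lemma expT (c : 'I_n * 'I_n -> R) :
  \sum_(f : {ffun 'I_n * 'I_n -> bool}) (\prod_p Hp p (f p)) *
     (\sum_(p : 'I_n * 'I_n | (p.1 < p.2)%N) (f p)%:R * c p)
  = \sum_(p : 'I_n * 'I_n | (p.1 < p.2)%N) Pp p * c p.
Proof.
under eq_bigr do rewrite mulr_sumr.
rewrite exchange_big /=; apply: eq_bigr => p hp.
under eq_bigr do rewrite mulrA.
by rewrite -mulr_suml marginal hp.
Qed.

End Fact.

Section Stat.
Variable R : realType.
Variables k n : nat.
Variable S : 'M[R]_k.
Variable rho : R.
Variables z e : 'I_n -> 'I_k.
Hypothesis Ssym : S^T = S.

Lemma Sxy a b : S a b = S b a.
Proof. by have := congr1 (fun M : 'M[R]_k => M b a) Ssym; rewrite mxE. Qed.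

Definition Lm (i j : 'I_n) : R := ln (S (e i) (e j)) - ln (S (z i) (z j)).
Definition Yst (A : adj n) : R := \sum_i \sum_j Aval R A i j * Lm i j.
Definition Tst (A : adj n) : R :=
  \sum_(p : 'I_n * 'I_n | (p.1 < p.2)%N) (A p)%:R * Lm p.1 p.2.

Lemma ocount_sum (u : 'I_n -> 'I_k) A (F : 'I_k -> 'I_k -> R) :
  \sum_a \sum_b o_count R u A a b * F a b = \sum_i \sum_j Aval R A i j * F (u i) (u j).
Proof.
rewrite pair_big /= (pair_big xpredT xpredT (fun i j => Aval R A i j * F (u i) (u j))) /=.
under eq_bigr do rewrite /o_count pair_big /= mulr_suml.
rewrite exchange_big /=; apply: eq_bigr => -[i j] _ /=.
rewrite (bigD1 (u i, u j)) //= !eqxx mul1r big1 ?addr0 1?mulrC //.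
move=> [a b] /=; rewrite xpair_eqE negb_and => H.
by rewrite (eq_sym (u i)) (eq_sym (u j)); case/orP: H => /negbTE -> ; rewrite ?andbF mul0r mul0r.
Qed.

Lemma Y_eq A : \sum_a \sum_b (o_count R e A a b - o_count R z A a b) * ln (S a b) = Yst A.
Proof.
under eq_bigr do under eq_bigr do rewrite mulrBl.
under eq_bigr do rewrite sumrB.
rewrite sumrB !ocount_sum -sumrB; apply: eq_bigr => i _.
rewrite -sumrB; apply: eq_bigr => j _; rewrite /Lm mulrBr //.
Qed.

Lemma expect_lin (F : adj n -> 'I_k -> 'I_k -> R) :
  \sum_a \sum_b sbm_expect rho S z (fun B => F B a b)
  = sbm_expect rho S z (fun B => \sum_a \sum_b F B a b).
Proof.
rewrite /sbm_expect.
under eq_bigr do rewrite exchange_big /=.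
rewrite exchange_big /=; apply: eq_bigr => A _.
rewrite mulr_sumr; apply: eq_bigr => a _; rewrite mulr_sumr //.
Qed.

Lemma W_eq A : Wstat rho S e z A =
  (2 * n%:R ^+ 2)^-1 * (Yst A - sbm_expect rho S z Yst).
Proof.
rewrite /Wstat.
set N := n%:R ^+ 2.
transitivity (2^-1 * \sum_a \sum_b (N^-1 * ((o_count R e A a b - o_count R z A a b) * ln (S a b))
   - N^-1 * sbm_expect rho S z (fun B => (o_count R e B a b - o_count R z B a b) * ln (S a b)))).
  congr (_ * _); apply: eq_bigr => a _; apply: eq_bigr => b _.
  have -> : sbm_expect rho S z (fun B => (o_count R e B a b - o_count R z B a b) * ln (S a b))
     = (sbm_expect rho S z (fun B => o_count R e B a b) - sbm_expect rho S z (fun B => o_count R z B a b)) * ln (S a b).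
    rewrite /sbm_expect -sumrB mulr_suml; apply: eq_bigr => B _; ring.
  ring.
under eq_bigr do rewrite sumrB.
under eq_bigr do rewrite -!mulr_sumr -mulrBr.
rewrite -mulr_sumr sumrB (expect_lin (fun B a b => (o_count R e B a b - o_count R z B a b) * ln (S a b))) /=.
rewrite Y_eq.
have -> : sbm_expect rho S z
    (fun B => \sum_a \sum_b (o_count R e B a b - o_count R z B a b) * ln (S a b))
   = sbm_expect rho S z Yst.
  by rewrite /sbm_expect; apply: eq_bigr => B _; rewrite Y_eq.
by rewrite (invfM 2 N) mulrA.
Qed.


Lemma sym_sum (X : 'I_n * 'I_n -> R) :
  (forall p, X (p.2, p.1) = X p) -> (forall i, X (i, i) = 0) ->
  \sum_p X p = 2 * \sum_(p : 'I_n * 'I_n | (p.1 < p.2)%N) X p.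
Proof.
move=> Hs Hd.
rewrite (bigID (fun p : 'I_n * 'I_n => (p.1 < p.2)%N)) /=.
rewrite [X in _ + X](bigID (fun p : 'I_n * 'I_n => (p.2 < p.1)%N)) /=.
rewrite [X in _ + (_ + X)]big1 ?addr0; last first.
  move=> [i j] /= /andP [H1 H2].
  have -> : i = j by apply/val_inj/eqP; rewrite eqn_leq leqNgt H2 leqNgt H1.
  exact: Hd.
rewrite [X in _ + X](reindex_inj (h := fun p : 'I_n * 'I_n => (p.2, p.1))) /=; last first.
  by move=> [a b] [c d] /= [-> ->].
have -> : \sum_(j : 'I_n * 'I_n | ~~ (j.2 < j.1)%N && (j.1 < j.2)%N) X (j.2, j.1)
   = \sum_(p : 'I_n * 'I_n | (p.1 < p.2)%N) X p.
  apply: eq_big => [[i j]|[i j] _] /=; last by rewrite (Hs (i, j)).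
  by case: (ltngtP i j).
by rewrite mulr2n mulrDl mul1r.
Qed.

Lemma Y_T A : valid_adj A -> Yst A = 2 * Tst A.
Proof.
case/andP => /forallP Hs /forallP Hd.
rewrite /Yst pair_big /=.
rewrite (@sym_sum (fun p : 'I_n * 'I_n => Aval R A p.1 p.2 * Lm p.1 p.2)) /=.
- congr (_ * _); apply: eq_bigr => -[i j] _ //.
- move=> [i j] /=; rewrite /Aval /Lm (Sxy (e j)) (Sxy (z j)).
  by have := Hs i => /forallP /(_ j) /eqP ->.
- by move=> i; rewrite /Aval (negbTE (Hd i)) mul0r.
Qed.

Lemma EY : sbm_expect rho S z Yst = 2 * \sum_(p : 'I_n * 'I_n | (p.1 < p.2)%N) Pp S rho z p * Lm p.1 p.2.
Proof.
rewrite factor.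
transitivity (2 * \sum_(f : {ffun 'I_n * 'I_n -> bool}) (\prod_p Hp S rho z p (f p)) *
     (\sum_(p : 'I_n * 'I_n | (p.1 < p.2)%N) (f p)%:R * Lm p.1 p.2)).
  rewrite mulr_sumr; apply: eq_bigr => f _.
  rewrite Y_T ?phi_valid // mulrCA; congr (_ * (_ * _)).
  by apply: eq_bigr => p hp; rewrite ffunE hp.
by rewrite (expT S rho z (fun p => Lm p.1 p.2)).
Qed.

End Stat.

Lemma eqle (R : numDomainType) (x y : R) : x = y -> x <= y.
Proof. by move->. Qed.

Lemma Kt_eq (R : realType) (t p q : R) : 0 < p -> 0 < q ->
  Kt t p q = p * (expR (t * (ln q - ln p)) - 1 - t * (ln q - ln p)).
Proof.
move=> hp hq; rewrite /Kt /powR (gt_eqF hp) (gt_eqF hq) -expRD.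
rewrite ln_div ?posrE //.
have -> : (1 - t) * ln p + t * ln q = ln p + t * (ln q - ln p) by ring.
rewrite expRD lnK ?posrE //; ring.
Qed.

Section Cher.
Variable R : realType.
Variables k n : nat.
Variable S : 'M[R]_k.
Variable rho : R.
Variables z e : 'I_n -> 'I_k.
Hypothesis Ssym : S^T = S.
Hypothesis Spos : forall a b, 0 < S a b.
Hypothesis rpos : 0 < rho.
Hypothesis rle : forall a b, rho * S a b <= 1.

Lemma Pp_ge0 p : 0 <= Pp S rho z p.
Proof. by rewrite /Pp mulr_ge0 ?ltW. Qed.
Lemma Pp_le1 p : 1 - Pp S rho z p >= 0.
Proof. by rewrite subr_ge0 rle. Qed.

Lemma w_ge0 A : 0 <= sbm_weight rho S z A.
Proof.
rewrite /sbm_weight; case: ifP => // _; apply: prodr_ge0 => p _.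
case: (A p); [exact: Pp_ge0 | exact: Pp_le1].
Qed.

Lemma chernoff (t x : R) : 0 <= t ->
  sbm_prob rho S z (fun A => x < Wstat rho S e z A) <=
  expR (- (n%:R ^+ 2 * (x * t)) + rho * \sum_(p : 'I_n * 'I_n | (p.1 < p.2)%N)
           Kt t (S (z p.1) (z p.2)) (S (e p.1) (e p.2))).
Proof.
move=> t0.
set N : R := n%:R ^+ 2.
have N0 : 0 <= N by rewrite /N exprn_ge0.
set ET := \sum_(p : 'I_n * 'I_n | (p.1 < p.2)%N) Pp S rho z p * Lm S z e p.1 p.2.
apply: (@le_trans _ _ (sbm_expect rho S z (fun A => expR (N * t * (Wstat rho S e z A - x))))).
  rewrite /sbm_prob /sbm_expect big_mkcond /=; apply: ler_sum => A _.
  case: ifP => H; last by rewrite mulr_ge0 ?w_ge0 ?expR_ge0.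
  rewrite -[X in X <= _]mulr1 ler_wpM2l ?w_ge0 //.
  apply: le_trans (expR_ge1Dx _); rewrite lerDl mulr_ge0 ?mulr_ge0 // subr_ge0 ltW //.
rewrite factor.
have HW : forall f, N * t * (Wstat rho S e z (phi f) - x) =
    - (N * (x * t)) - t * ET + \sum_(p : 'I_n * 'I_n | (p.1 < p.2)%N) (f p)%:R * (t * Lm S z e p.1 p.2).
  move=> f; rewrite W_eq // EY // Y_T ?phi_valid //.
  have -> : \sum_(p : 'I_n * 'I_n | (p.1 < p.2)%N) (f p)%:R * (t * Lm S z e p.1 p.2)
      = t * Tst S z e (phi f).
    rewrite /Tst mulr_sumr; apply: eq_bigr => p hp; rewrite ffunE hp; ring.
  have [n0|n0] := eqVneq n 0%N.
    have E0 : forall F : 'I_n * 'I_n -> R, \sum_(p : 'I_n * 'I_n | (p.1 < p.2)%N) F p = 0.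
      move=> F; apply: big1 => -[i j] _; have := ltn_ord i; by rewrite {2}n0.
    rewrite /ET /Tst !E0 /N n0 expr0n /= mul0r mulr0; ring.
  have NN : N != 0 by rewrite /N sqrf_eq0 pnatr_eq0.
  rewrite /N /ET in NN *; field; by rewrite ?pnatr_eq0.
under eq_bigr do rewrite HW expRD mulrCA.
rewrite -mulr_sumr (mgf S rho z (fun p => t * Lm S z e p.1 p.2)).
rewrite [X in _ <= X]expRD [X in X * _ <= _]expRD -mulrA ler_wpM2l ?expR_ge0 //.
apply: (@le_trans _ _ (expR (- (t * ET)) * expR (\sum_(p : 'I_n * 'I_n | (p.1 < p.2)%N) Pp S rho z p * (expR (t * Lm S z e p.1 p.2) - 1)))).
  rewrite ler_wpM2l ?expR_ge0 // expR_sum; apply: ler_prod => p _.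
  apply/andP; split; first by apply: addr_ge0; [exact: Pp_le1 | rewrite mulr_ge0 ?expR_ge0 //; exact: Pp_ge0].
  apply: le_trans (expR_ge1Dx _). by apply: eqle; ring.
rewrite -expRD ler_expR /ET mulr_sumr -sumrN -big_split /= mulr_sumr; apply: ler_sum => p _.
rewrite Kt_eq // /Pp /Lm; apply: eqle; ring.
Qed.

End Cher.

Lemma card_ind (T : finType) (R : numDomainType) (P : pred T) :
  (#|[set i | P i]|)%:R = \sum_i (P i)%:R :> R.
Proof.
rewrite -sum1dep_card natr_sum big_mkcond /=; apply: eq_bigr => i _; by case: (P i).
Qed.

Lemma le_sum1 (R : numDomainType) (I : finType) (F : I -> R) i :
  (forall j, 0 <= F j) -> F i <= \sum_j F j.
Proof.
move=> H; rewrite (bigD1 i) //= lerDl; apply: sumr_ge0 => j _; exact: H.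
Qed.

Definition Bnd (R : realType) (p q : R) : R := p * (expR `|ln q - ln p| + `|ln q - ln p|).
Definition D0 (R : realType) (k : nat) (S : 'M[R]_k) : R :=
  \sum_a \sum_b \sum_c \sum_d Bnd (S a b) (S c d).

Section Comb.
Variable R : realType.
Variables k n : nat.
Variable S : 'M[R]_k.
Variables z e : 'I_n -> 'I_k.
Variable t : R.
Hypothesis Ssym : S^T = S.
Hypothesis Spos : forall a b, 0 < S a b.
Hypothesis t0 : 0 <= t.
Hypothesis t1 : t <= 1.

Lemma Kt_ge0 p q : 0 < p -> 0 < q -> 0 <= Kt t p q.
Proof.
move=> hp hq; rewrite Kt_eq //; apply: mulr_ge0; first exact: ltW.
have := expR_ge1Dx (t * (ln q - ln p)); move=> h; lra.
Qed.

Lemma Kt_same p : 0 < p -> Kt t p p = 0.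
Proof. by move=> hp; rewrite Kt_eq // subrr mulr0 expR0; apply/eqP; rewrite mulf_eq0 subr0 subrr eqxx orbT. Qed.

Lemma Bnd_ge0 (p q : R) : 0 < p -> 0 <= Bnd p q.
Proof. by move=> hp; rewrite /Bnd; apply: mulr_ge0; [exact: ltW | rewrite addr_ge0 ?expR_ge0]. Qed.

Lemma Kt_le p q : 0 < p -> 0 < q -> Kt t p q <= Bnd p q.
Proof.
move=> hp hq; rewrite Kt_eq // /Bnd; apply: ler_wpM2l; first exact: ltW.
set D := ln q - ln p; clearbody D.
have h1 : D <= `|D| by apply: ler_norm.
have h2 : - D <= `|D| by rewrite -normrN ler_norm.
have h0 : 0 <= `|D| by apply: normr_ge0.
have m1 := mulr_ge0 t0 (introT idP (etrans (subr_ge0 _ _) h1)).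
have m2 := mulr_ge0 t0 (introT idP (etrans (subr_ge0 _ _) h2)).
have m3 := mulr_ge0 (introT idP (etrans (subr_ge0 _ _) t1)) h0.
have h3 : t * D <= `|D| by lra.
have h4 : - (t * D) <= `|D| by lra.
have h5 : expR (t * D) <= expR `|D| by rewrite ler_expR.
lra.
Qed.

Lemma Kt_leD a b c d : Kt t (S a b) (S c d) <= D0 S.
Proof.
apply: le_trans (Kt_le (Spos a b) (Spos c d)) _.
have G4 : forall a b c d, 0 <= Bnd (S a b) (S c d) by move=> *; apply: Bnd_ge0.
have s1 := @le_sum1 _ _ (fun d => Bnd (S a b) (S c d)) d (fun d => G4 a b c d).
have s2 := @le_sum1 _ _ (fun c => \sum_d Bnd (S a b) (S c d)) c
   (fun c' => sumr_ge0 _ (fun d _ => G4 a b c' d)).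
have s3 := @le_sum1 _ _ (fun b => \sum_c \sum_d Bnd (S a b) (S c d)) b
   (fun b' => sumr_ge0 _ (fun c _ => sumr_ge0 _ (fun d _ => G4 a b' c d))).
have s4 := @le_sum1 _ _ (fun a => \sum_b \sum_c \sum_d Bnd (S a b) (S c d)) a
   (fun a' => sumr_ge0 _ (fun b _ => sumr_ge0 _ (fun c _ => sumr_ge0 _ (fun d _ => G4 a' b c d)))).
exact: (le_trans s1 (le_trans s2 (le_trans s3 s4))).
Qed.

Lemma D0_ge0 : 0 <= D0 S.
Proof. by do 4! (apply: sumr_ge0 => ? _); apply: Bnd_ge0. Qed.

Definition Kz (i j : 'I_n) := Kt t (S (z i) (z j)) (S (e i) (e j)).
Definition Jz (i j : 'I_n) := Kt t (S (z i) (z j)) (S (z i) (e j)).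
Definition bz (i : 'I_n) : R := (e i != z i)%:R.
Definition Gz (i j : 'I_n) := bz j * Jz i j.

Lemma Gz_ge0 i j : 0 <= Gz i j.
Proof. by rewrite /Gz mulr_ge0 ?ler0n // Kt_ge0. Qed.

Lemma pointwise i j : Kz i j <= Gz i j + Gz j i + 3 * D0 S * bz i * bz j.
Proof.
have g1 := Gz_ge0 i j; have g2 := Gz_ge0 j i; have d0 := D0_ge0.
rewrite /Gz /bz /Kz /Jz in g1 g2 *.
case: (eqVneq (e i) (z i)) => hi; case: (eqVneq (e j) (z j)) => hj /=.
- by rewrite hi hj Kt_same // !mulr0 !mul0r !addr0.
- rewrite hi !mul1r mulr0 mul0r addr0; lra.
- rewrite hj !mul1r mulr0 addr0 (Sxy Ssym (z j) (z i)) (Sxy Ssym (z j) (e i)); lra.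
- have := Kt_leD (z i) (z j) (e i) (e j); rewrite hi hj /= !mul1r in g1 g2; rewrite !mulr1; move=> h; lra.
Qed.


Lemma sumK : \sum_(p : 'I_n * 'I_n | (p.1 < p.2)%N) Kz p.1 p.2 <=
   \sum_i \sum_j Gz i j + 2 * D0 S * (hamming e z)%:R ^+ 2.
Proof.
set F := fun i j : 'I_n => if (i < j)%N then Kz i j else 0.
have E1 : \sum_(p : 'I_n * 'I_n | (p.1 < p.2)%N) Kz p.1 p.2 = \sum_i \sum_j F i j.
  by rewrite pair_big /= big_mkcond.
have E2 : \sum_i \sum_j (F i j + F j i) = 2 * \sum_i \sum_j F i j.
  under eq_bigr do rewrite big_split /=.
  rewrite big_split /= [X in _ + X]exchange_big /=; ring.
have E3 : \sum_i \sum_j (Gz i j + Gz j i + 3 * D0 S * bz i * bz j)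
   = 2 * \sum_i \sum_j Gz i j + 3 * D0 S * (\sum_i bz i) ^+ 2.
  under eq_bigr do rewrite big_split /= big_split /=.
  rewrite big_split /= big_split /= [X in _ + X + _]exchange_big /=.
  have Q : forall d : R, \sum_i \sum_j d * bz i * bz j = d * (\sum_i bz i) ^+ 2.
    move=> d; rewrite expr2 mulr_suml mulr_sumr; apply: eq_bigr => i _.
    rewrite mulr_sumr mulr_sumr; apply: eq_bigr => j _; ring.
  rewrite (Q (3 * D0 S)); ring.
have Hm : \sum_i bz i = (hamming e z)%:R.
  by rewrite /hamming card_ind.
have Hle : \sum_i \sum_j (F i j + F j i) <= \sum_i \sum_j (Gz i j + Gz j i + 3 * D0 S * bz i * bz j).
  apply: ler_sum => i _; apply: ler_sum => j _.
  have g1 := Gz_ge0 i j; have g2 := Gz_ge0 j i.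
  have b1 : 0 <= bz i by rewrite /bz ler0n.
  have b2 : 0 <= bz j by rewrite /bz ler0n.
  have d := D0_ge0.
  have bb : 0 <= 3 * D0 S * bz i * bz j by rewrite !mulr_ge0.
  rewrite /F; case: (ltngtP i j) => _.
  - by rewrite addr0 pointwise.
  - have := pointwise j i; move=> h; lra.
  - lra.
have Gs : 0 <= \sum_i \sum_j Gz i j by do 2! (apply: sumr_ge0 => ? _); apply: Gz_ge0.
have Ms : 0 <= D0 S * (hamming e z)%:R ^+ 2 by rewrite mulr_ge0 ?D0_ge0 ?exprn_ge0.
rewrite E1; move: Hle; rewrite E2 E3 Hm; move=> h; lra.
Qed.


Lemma pick1 (T : finType) (u : T) (X : T -> R) : \sum_a (u == a)%:R * X a = X u.
Proof.
rewrite (bigD1 u) //= eqxx mul1r big1 ?addr0 // => a; rewrite eq_sym => /negbTE ->.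
by rewrite mul0r.
Qed.

Lemma pick1' (T : finType) (u : T) : \sum_a (u == a)%:R = 1 :> R.
Proof.
rewrite (bigD1 u) //= eqxx big1 ?addr0 // => a; rewrite eq_sym => /negbTE -> //.
Qed.

Lemma colsum a : ((confusion R e z)^T *m const_mx 1) a (@ord0 0) = (\sum_i (z i == a)%:R) / n%:R.
Proof.
rewrite mxE; under eq_bigr do rewrite !mxE mulr1.
rewrite -mulr_suml; congr (_ / _).
under eq_bigr do rewrite card_ind.
rewrite exchange_big /=; apply: eq_bigr => i _.
case: (z i == a); last by apply: big1 => c _; rewrite andbF.
under eq_bigr do rewrite andbT.
exact: pick1'.
Qed.

Lemma confE b' b : confusion R e z b' b = (\sum_j ((e j == b') && (z j == b))%:R) / n%:R.
Proof. by rewrite mxE card_ind. Qed.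

Lemma inner i j : \sum_a \sum_b \sum_(b' | b != b')
   (z i == a)%:R * Kt t (S a b) (S a b') * ((e j == b') && (z j == b))%:R = Gz i j.
Proof.
rewrite (bigD1 (z i)) //= [X in _ + X]big1 ?addr0; last first.
  move=> a; rewrite eq_sym => /negbTE H; apply: big1 => b _; apply: big1 => b' _.
  by rewrite H !mul0r.
rewrite (bigD1 (z j)) //= [X in _ + X]big1 ?addr0; last first.
  move=> b; rewrite eq_sym => /negbTE H; apply: big1 => b' _.
  by rewrite H andbF mulr0.
rewrite /Gz /bz /Jz; case: (eqVneq (e j) (z j)) => hj.
  rewrite mul0r; apply: big1 => b' hb'; by rewrite !eqxx andbT hj (negbTE hb') mulr0.
rewrite (bigD1 (e j)) /=; last by rewrite eq_sym.
rewrite [X in _ + X]big1 ?addr0; last first.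
  by move=> b' /andP [_]; rewrite eq_sym => /negbTE ->; rewrite mulr0.
by rewrite !eqxx /= mulr1 !mul1r.
Qed.

Lemma prodsum (X Y : 'I_n -> R) c :
  (\sum_i X i) * c * (\sum_j Y j) = \sum_(p : 'I_n * 'I_n) X p.1 * c * Y p.2.
Proof.
rewrite mulr_suml mulr_suml -(pair_big xpredT xpredT (fun i j => X i * c * Y j)) /=.
by apply: eq_bigr => i _; rewrite mulr_sumr.
Qed.

Lemma swap3 (I : finType) (F : 'I_k -> 'I_k -> 'I_k -> I -> R) :
  \sum_a \sum_b \sum_(c | b != c) \sum_i F a b c i
  = \sum_i \sum_a \sum_b \sum_(c | b != c) F a b c i.
Proof.
under eq_bigr => a _ do under eq_bigr => b _ do rewrite exchange_big.
under eq_bigr => a _ do rewrite exchange_big.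
by rewrite exchange_big.
Qed.

Lemma sumG : \sum_i \sum_j Gz i j = n%:R ^+ 2 * Ct t (confusion R e z) S.
Proof.
have [n0|n0] := eqVneq n 0%N.
  have -> : n%:R = 0 :> R by rewrite n0.
  rewrite expr0n /= mul0r; apply: big1 => i; have := ltn_ord i; by rewrite {2}n0.
have nn : n%:R != 0 :> R by rewrite pnatr_eq0.
have step1 : n%:R ^+ 2 * Ct t (confusion R e z) S =
   \sum_a \sum_b \sum_(b' | b != b') (\sum_i (z i == a)%:R) * Kt t (S a b) (S a b')
      * (\sum_j ((e j == b') && (z j == b))%:R).
  rewrite /Ct mulr_sumr; apply: eq_bigr => a _; rewrite mulr_sumr; apply: eq_bigr => b _.
  rewrite mulr_sumr; apply: eq_bigr => b' _.
  rewrite colsum confE; field; exact: nn.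
rewrite step1; symmetry.
under eq_bigr do under eq_bigr do under eq_bigr do rewrite prodsum.
rewrite (swap3 (fun a b b' (p : 'I_n * 'I_n) => (z p.1 == a)%:R * Kt t (S a b) (S a b') * ((e p.2 == b') && (z p.2 == b))%:R)).
rewrite [RHS]pair_big /=; apply: eq_bigr => -[i j] _ /=.
by rewrite inner.
Qed.

End Comb.

Unset Implicit Arguments. Set Strict Implicit.
Local Open Scope classical_set_scope.
Local Open Scope ring_scope.
Lemma bound_t (R : realType) (k : nat) (S : 'M[R]_k) (rho : R) (n : nat) (z e : 'I_n -> 'I_k) (x t : R) :
  S^T = S -> (forall a b, 0 < S a b) -> 0 < rho -> (forall a b, rho * S a b <= 1) ->
  0 <= t -> t <= 1 ->
  sbm_prob rho S z (fun A => x < Wstat rho S e z A) <=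
  expR (- (n%:R ^+ 2 * (x * t - rho * Ct t (confusion R e z) S))
        + 2 * D0 S * rho * (hamming e z)%:R ^+ 2).
Proof.
move=> Ssym Spos rpos rle t0 t1.
apply: le_trans (chernoff z e Ssym Spos rpos rle x t0) _.
rewrite ler_expR.
have := sumK z e Ssym Spos t0 t1; rewrite sumG /Kz => h.
have := ler_wpM2l (ltW rpos) h => h2.
set A := (X in rho * X <= _) in h2.
set B := Ct t _ _ in h2 *.
set M := (hamming e z)%:R ^+ 2 in h2 *.
set N := n%:R ^+ 2 in h2 *.
have -> : - (N * (x * t - rho * B)) + 2 * D0 S * rho * M = - (N * (x * t)) + rho * (N * B + 2 * D0 S * M) by ring.
by rewrite lerD2l.
Qed.

Theorem proposition2 (R : realType) (k : nat) (S : 'M[R]_k) :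
  (2 <= k)%N ->
  S^T = S ->
  (forall a b, 0 < S a b) ->
  exists D : R,
    forall (pi : 'I_k -> R) (rho : nat -> R),
      (forall a, 0 < pi a) -> \sum_(a < k) pi a = 1 ->
      (forall m, 0 < rho m) ->
      (forall m a b, rho m * S a b <= 1) ->
      rho m @[m --> \oo] --> (0 : R) ->
      forall (n : nat) (z e : 'I_n -> 'I_k) (x : R),
        sbm_prob (rho n) S z (fun A => x < Wstat (rho n) S e z A)
        <= expR (- sup [set (n%:R ^+ 2 * (x * t - rho n * Ct t (confusion R e z) S))
                         | t in `]0, 1]]
                 + D * rho n * (hamming e z)%:R ^+ 2).
Proof.
move=> _ Ssym Spos; exists (2 * D0 S) => pi rho _ _ rpos rle _ n z e x.
set P := sbm_prob _ _ _ _.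
set c := 2 * D0 S * rho n * (hamming e z)%:R ^+ 2.
have Pge0 : 0 <= P.
  by rewrite /P /sbm_prob; apply: sumr_ge0 => A _; apply: w_ge0 => //; exact: rle.
have [P0|Ppos] := eqVneq P 0.
  by rewrite P0 expR_ge0.
have Pp : 0 < P by rewrite lt_neqAle eq_sym Ppos Pge0.
set E := [set _ | t in _].
have HE : ubound E (c - ln P).
  move=> y [t ht <-].
  move: ht; rewrite /= in_itv /= => /andP [ht0 ht1].
  have hb := @bound_t _ _ S (rho n) n z e x t Ssym Spos (rpos n) (rle n) (ltW ht0) ht1.
  have := hb; rewrite -/P -/c -(ler_ln (x := P)) ?posrE ?expR_gt0 // expRK => h.
  lra.
have nE : E !=set0.
  exists (n%:R ^+ 2 * (x * 1 - rho n * Ct 1 (confusion R e z) S)); exists 1 => //.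
  by rewrite /= in_itv /= ltr01 lexx.
have := ge_sup nE HE => hs.
apply: (@le_trans _ _ (expR (- (c - ln P) + c))).
  by rewrite (_ : - (c - ln P) + c = ln P) ?lnK ?posrE //; ring.
by rewrite ler_expR lerD2r lerN2.
Qed.
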